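(* Let $p$ be a prime. Let $X$ be a finite group with a core-free subgroup $Y$ and a normal subgroup $N$; let $G=X/N$ with quotient map $x\mapsto\overline{x}$ and let $H=\overline{Y}$. Suppose $H$ is core-free in $G$ and that $G$, acting transitively on the right cosets of $H$, is not $p$-elusive. If $X$, acting transitively on the right cosets of $Y$, is $p$-elusive, then $X$ does not split over $N$ (that is, $N$ has no complement in $X$).
   Context: A derangement is a permutation with no fixed points. For a prime $p$, a transitive permutation group is $p$-elusive if it has no derangements of order $p$. *)

(* Defs.v *)
From HB Require Import structures.
From mathcomp Require Import all_boot all_fingroup.
Set Implicit Arguments. Unset Strict Implicit. Unset Printing Implicit Defensive.
Local Open Scope group_scope.

Section Elusive.
Variable gT : finGroupType.

Definition derangement (G H : {set gT}) (g : gT) : bool :=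
  [forall C in rcosets H G, C :* g != C].

Definition p_elusive (p : nat) (G H : {set gT}) : bool :=
  [forall g in G, (#[g] == p) ==> ~~ derangement G H g].

Definition core_free (H G : {set gT}) : bool := gcore H G == 1.
End Elusive.

(* Main.v *)
Require Import Defs.
From HB Require Import structures.
From mathcomp Require Import all_boot all_fingroup.
Local Open Scope group_scope.

Theorem lemma2p3 (gT : finGroupType) (p : nat) (X Y N : {group gT}) :
  prime p ->
  Y \subset X ->
  core_free Y X ->
  N <| X ->
  core_free (Y / N) (X / N) ->
  ~~ p_elusive p (X / N) (Y / N) ->
  p_elusive p X Y ->
  ~~ [splits X, over N].
Proof.
move=> _ sYX _ /andP[sNX nNX] _ nel el; apply/negP => /splitsP[K /complP[tiNK defX]].
have sKX : K \subset X by rewrite -defX mulG_subr.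
have nNK : K \subset 'N(N) := subset_trans sKX nNX.
have isoK := quotient_isom nNK tiNK.
have injf := isom_inj isoK.
move: nel; rewrite /p_elusive negb_forall_in => /existsP[gb /andP[Xgb]].
rewrite negb_imply negbK => /andP[/eqP ogb der].
have : gb \in K / N by rewrite -quotientMidl defX.
case/morphimP=> g Ng Kg Egb; subst gb.
have Xg : g \in X := subsetP sKX g Kg.
have og : #[g] = p.
  by rewrite -ogb -(order_injm injf Kg) /=.
move/forall_inP: el => /(_ g Xg); rewrite og eqxx /=.
rewrite /derangement negb_forall_in => /existsP[C /andP[/rcosetsP[x Xx ->] /negPn/eqP Hfix]].
move/forall_inP: der => /(_ ((Y / N) :* coset N x)).
rewrite mem_rcosets => H.
have Xq : coset N x \in X / N by apply: mem_quotient.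
have : coset N x \in (Y / N)%G * (X / N) by rewrite mulSGid ?quotientS.
move/H/negP; apply.
have nNx : x \in 'N(N) := subsetP nNX x Xx.
have nNg : g \in 'N(N) := subsetP nNX g Xg.
have Yc : x * g * x^-1 \in Y.
  have : x * g \in Y :* x :* g by rewrite -rcosetM rcoset_sym ?rcoset_refl //.
  by rewrite Hfix => /rcosetP[y Yy ->]; rewrite mulgK.
have Yq : coset N x * coset N g * (coset N x)^-1 \in Y / N.
  by rewrite -morphV // -!morphM ?groupM ?groupV // mem_quotient.
apply/eqP; rewrite -rcosetM -{2}(rcoset_id Yq) -rcosetM mulgKV //.
Qed.
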